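(* Let $q \ge 2$ and for $i = 1,\dots,q$ let $\Sigma_i \subset \mathbb{R}^{N_i}$ be nonempty; let $\Sigma = \Sigma_1 \times \cdots \times \Sigma_q$, equipped with the norm $\|(x_1,\dots,x_q)\|_2 = \sqrt{\sum_i \|x_i\|_2^2}$. For each $i$ let $P_i$ be a generalized projection onto $\Sigma_i$ minimizing $\beta_{\Sigma_i}$ over all generalized projections onto $\Sigma_i$, with $\beta_{\Sigma_i}(P_i) < \infty$. Define $P_\Sigma(z) = (P_1(z_1),\dots,P_q(z_q))$ (i.e., the set $P_1(z_1)\times\cdots\times P_q(z_q)$). Then $P_\Sigma$ minimizes $\beta_\Sigma$ over all generalized projections onto $\Sigma$.
   Context: A (set-valued) generalized projection onto $\Sigma \subset \mathbb{R}^N$ is a map $P$ assigning to each $z \in \mathbb{R}^N$ a nonempty subset $P(z) \subset \Sigma$. Restricted Lipschitz property: $P$ has the restricted $\beta$-Lipschitz property with respect to $\Sigma$ if for all $z \in \mathbb{R}^N$, all $x \in \Sigma$ and all $u \in P(z)$, $\|u - x\|_2 \le \beta\|z - x\|_2$; $\beta_\Sigma(P)$ denotes the smallest such $\beta$ (possibly $+\infty$). *)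

(* Defs.v *)
From HB Require Import structures.
From mathcomp Require Import all_boot all_order all_algebra.
From mathcomp Require Import all_classical all_reals ereal.
Set Implicit Arguments. Unset Strict Implicit. Unset Printing Implicit Defensive.
Import Order.TTheory GRing.Theory Num.Theory.
Local Open Scope classical_set_scope.
Local Open Scope ring_scope.

(* R^N is modelled as functions I -> R for a finite index type I
   (R^N = R^{'I_N}); Euclidean 2-norm. *)
Definition eucl_norm (R : realType) (I : finType) (v : I -> R) : R :=
  Num.sqrt (\sum_(i : I) v i ^+ 2).

Definition vsub (R : realType) (I : finType) (u v : I -> R) : I -> R :=
  fun i => u i - v i.

Definition gen_proj (R : realType) (I : finType) (Sig : set (I -> R))
  (P : (I -> R) -> set (I -> R)) : Prop :=
  forall z, P z !=set0 /\ P z `<=` Sig.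

Definition restricted_lip (R : realType) (I : finType) (Sig : set (I -> R))
  (P : (I -> R) -> set (I -> R)) (b : R) : Prop :=
  forall z x u, Sig x -> P z u ->
    eucl_norm (vsub u x) <= b * eucl_norm (vsub z x).

Definition beta (R : realType) (I : finType) (Sig : set (I -> R))
  (P : (I -> R) -> set (I -> R)) : \bar R :=
  ereal_inf [set b%:E | b in [set b : R | 0 <= b /\ restricted_lip Sig P b]].

Definition beta_optimal (R : realType) (I : finType) (Sig : set (I -> R))
  (P : (I -> R) -> set (I -> R)) : Prop :=
  gen_proj Sig P /\
  forall P', gen_proj Sig P' -> (beta Sig P <= beta Sig P')%E.

(* Product space R^{N_1} x ... x R^{N_q}, indexed by the pairs (i, j) with
   j < N i; its Euclidean norm is sqrt(sum_i ||x_i||^2). *)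
Definition prod_idx (q : nat) (N : 'I_q -> nat) : finType :=
  {i : 'I_q & 'I_(N i)}.

Definition comp (R : realType) (q : nat) (N : 'I_q -> nat)
  (x : @prod_idx q N -> R) (i : 'I_q) : 'I_(N i) -> R :=
  fun j => x (@Tagged 'I_q i (fun k => 'I_(N k)) j).

Definition prod_set (R : realType) (q : nat) (N : 'I_q -> nat)
  (Sig : forall i : 'I_q, set ('I_(N i) -> R)) : set (@prod_idx q N -> R) :=
  [set x | forall i, Sig i (@comp R q N x i)].

Definition prod_proj (R : realType) (q : nat) (N : 'I_q -> nat)
  (P : forall i : 'I_q, ('I_(N i) -> R) -> set ('I_(N i) -> R))
  (z : @prod_idx q N -> R) : set (@prod_idx q N -> R) :=
  [set u | forall i, P i (@comp R q N z i) (@comp R q N u i)].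

(* Main.v *)
Require Import Defs.
From HB Require Import structures.
From mathcomp Require Import all_boot all_order all_algebra.
From mathcomp Require Import all_classical all_reals ereal.
From mathcomp Require Import lra.
Import Order.TTheory GRing.Theory Num.Theory.
Set Implicit Arguments. Unset Strict Implicit.
Local Open Scope classical_set_scope.
Local Open Scope ring_scope.

Section Helpers.
Variable R : realType.

Definition nsq (I : finType) (v : I -> R) : R := \sum_(i : I) v i ^+ 2.

Lemma nsq_ge0 (I : finType) (v : I -> R) : 0 <= nsq v.
Proof. by apply: sumr_ge0 => i _; apply: sqr_ge0. Qed.

Lemma norm_sq (I : finType) (v : I -> R) : eucl_norm v ^+ 2 = nsq v.
Proof. by rewrite /eucl_norm sqr_sqrtr // nsq_ge0. Qed.

Lemma norm_ge0 (I : finType) (v : I -> R) : 0 <= eucl_norm v.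
Proof. exact: sqrtr_ge0. Qed.

Lemma lip_of_sq (I : finType) (S : set (I -> R)) (P : (I -> R) -> set (I -> R)) c :
  0 <= c ->
  (forall z x u, S x -> P z u -> nsq (vsub u x) <= c ^+ 2 * nsq (vsub z x)) ->
  restricted_lip S P c.
Proof.
move=> c0 H z x u Sx Pu.
rewrite /eucl_norm -[c]ger0_norm // -sqrtr_sqr -sqrtrM ?sqr_ge0 //.
exact/ler_wsqrtr/H.
Qed.

Lemma sq_of_lip (I : finType) (S : set (I -> R)) (P : (I -> R) -> set (I -> R)) c :
  0 <= c -> restricted_lip S P c ->
  forall z x u, S x -> P z u -> nsq (vsub u x) <= c ^+ 2 * nsq (vsub z x).
Proof.
move=> c0 H z x u Sx Pu.
have := H z x u Sx Pu.
rewrite -(norm_sq (vsub u x)) -(norm_sq (vsub z x)).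
have := norm_ge0 (vsub u x); have := norm_ge0 (vsub z x).
move: (eucl_norm _) (eucl_norm _) => a b a0 b0 hab.
nra.
Qed.

Lemma beta_le (I : finType) (S : set (I -> R)) (P : (I -> R) -> set (I -> R)) b :
  0 <= b -> restricted_lip S P b -> (beta S P <= b%:E)%E.
Proof. by move=> b0 hb; apply: ereal_inf_lbound; exists b. Qed.

Lemma lip_mono (I : finType) (S : set (I -> R)) (P : (I -> R) -> set (I -> R)) b c :
  b <= c -> restricted_lip S P b -> restricted_lip S P c.
Proof.
move=> bc hb z x u Sx Pu; apply: (le_trans (hb z x u Sx Pu)).
by apply: ler_wpM2r => //; apply: norm_ge0.
Qed.

Lemma lip_of_beta (I : finType) (S : set (I -> R)) (P : (I -> R) -> set (I -> R)) c :
  (beta S P < c%:E)%E -> restricted_lip S P c.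
Proof.
move=> /ereal_inf_lt [y [b [b0 hb] <-]]; rewrite lte_fin => /ltW bc.
exact: lip_mono hb.
Qed.

Variables (q : nat) (N : 'I_q -> nat).

Lemma nsq_prod (v : @prod_idx q N -> R) :
  nsq v = \sum_(i : 'I_q) nsq ((@Defs.comp _ _ _ v i)).
Proof.
rewrite /nsq.
symmetry; rewrite (sig_big_dep xpredT (fun _ _ => true) (fun i (j : 'I_(N i)) => (@Defs.comp _ _ _ v i) j ^+ 2)) /=.
by apply: eq_bigr => -[i j].
Qed.

Lemma comp_vsub (u v : @prod_idx q N -> R) i :
  (@Defs.comp _ _ _ (vsub u v) i) = vsub ((@Defs.comp _ _ _ u i)) ((@Defs.comp _ _ _ v i)).
Proof. by []. Qed.

Variable a : @prod_idx q N -> R.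

Definition emb (i : 'I_q) (w : 'I_(N i) -> R) (t : @prod_idx q N) : R :=
  match tag t =P i with
  | ReflectT h => w (cast_ord (congr1 N h) (tagged t))
  | ReflectF _ => a t
  end.

Lemma comp_emb_eq i w : (@Defs.comp _ _ _ (emb w) i) = w.
Proof.
apply: funext => j; rewrite /Defs.comp /emb /=.
case: (i =P i) => [h|//]; congr w; exact: val_inj.
Qed.

Lemma comp_emb_neq i k w : k != i -> (@Defs.comp _ _ _ (@emb i w) k) = (@Defs.comp _ _ _ a k).
Proof.
move=> /negPf ki; apply: funext => j; rewrite /Defs.comp /emb /=.
by case: (k =P i) => // h; move: ki; rewrite {1}h eqxx.
Qed.

End Helpers.
Unset Implicit Arguments.

Theorem corollary1 (R : realType) (q : nat) (hq : (2 <= q)%N)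
  (N : 'I_q -> nat)
  (Sig : forall i : 'I_q, set ('I_(N i) -> R))
  (P : forall i : 'I_q, ('I_(N i) -> R) -> set ('I_(N i) -> R))
  (hSig : forall i, Sig i !=set0)
  (hopt : forall i, beta_optimal (Sig i) (P i))
  (hfin : forall i, (beta (Sig i) (P i) < +oo)%E) :
  beta_optimal (prod_set Sig) (prod_proj P).
Proof.
have gp : gen_proj (prod_set Sig) (prod_proj P).
  move=> z; split.
    pose u i := projT1 (cid ((hopt i).1 ((@Defs.comp _ _ _ z i))).1).
    exists (fun t => u (tag t) (tagged t)) => i.
    exact: (projT2 (cid ((hopt i).1 ((@Defs.comp _ _ _ z i))).1)).
  by move=> u hu i; apply: ((hopt i).1 ((@Defs.comp _ _ _ z i))).2; apply: hu.
split => // P' gP'.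
pose a0 i := projT1 (cid (hSig i)).
pose a : @prod_idx q N -> R := fun t => a0 (tag t) (tagged t).
have aS : prod_set Sig a by move=> i; exact: (projT2 (cid (hSig i))).
apply/ereal_infP => _ [b [b0 hb] <-].
apply/lee_addgt0Pr => e e0.
rewrite -EFinD; apply: beta_le; first by lra.
have hi : forall i, restricted_lip (Sig i) (P i) (b + e).
  move=> i; apply: lip_of_beta.
  pose Pi (w : 'I_(N i) -> R) := [set (@Defs.comp _ _ _ u i) | u in P' (emb a w)].
  have gPi : gen_proj (Sig i) Pi.
    move=> w; split.
      have [u hu] := (gP' (emb a w)).1.
      by exists ((@Defs.comp _ _ _ u i)); exists u.
    move=> _ [u hu <-]; exact: ((gP' (emb a w)).2 u hu i).
  apply: (le_lt_trans ((hopt i).2 Pi gPi)).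
  apply: (le_lt_trans (y := b%:E)); last by rewrite lte_fin; lra.
  apply: beta_le => //.
  apply: lip_of_sq => // w x _ Sx [u hu <-].
  have embS : prod_set Sig (emb a x).
    move=> k; case: (eqVneq k i) => [->|ki].
      by rewrite comp_emb_eq.
    by rewrite comp_emb_neq //; apply: aS.
  have := sq_of_lip b0 hb embS hu.
  rewrite !nsq_prod.
  rewrite (bigD1 i) //= [X in _ <= _ * X -> _](bigD1 i) //= => h.
  have E1 : @Defs.comp _ _ _ (vsub (emb a w) (emb a x)) i = vsub w x.
    by rewrite comp_vsub !comp_emb_eq.
  have E2 : @Defs.comp _ _ _ (vsub u (emb a x)) i = vsub (@Defs.comp _ _ _ u i) x.
    by rewrite comp_vsub !comp_emb_eq.
  have E0 : \sum_(k < q | k != i) nsq (@Defs.comp _ _ _ (vsub (emb a w) (emb a x)) k) = 0.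
    apply: big1 => k ki; rewrite comp_vsub !comp_emb_neq //.
    rewrite /nsq big1 // => j _; rewrite /vsub subrr; exact: expr0n.
  rewrite E1 E2 E0 addr0 in h.
  apply: le_trans h.
  rewrite lerDl; apply: sumr_ge0 => k _; exact: nsq_ge0.
apply: lip_of_sq; first by lra.
move=> z x u Sx Pu; rewrite !nsq_prod mulr_sumr.
apply: ler_sum => i _; rewrite !comp_vsub.
have c0 : 0 <= b + e by lra.
exact: (sq_of_lip c0 (hi i) (Sx i) (Pu i)).
Qed.
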